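(* Suppose $\frac1n<R\le\frac2{n+1}$ and let $\ell_1=\lceil 2n-\frac2R+1\rceil-1$. Then for every bid set $B_{\mathcal D}$ of $\mathcal D$ (a multiset of $n$ nonnegative reals with sum $\beta$), $$W(\pi_{\rm unif},B_{\mathcal D})\ge \frac{\ell_1}{n}.$$
   Context: Position-randomized auction with two bidders $\mathcal A$ and $\mathcal D$ and $n\ge1$ objects. $\mathcal D$ has budget $\beta>0$ and $\mathcal A$ has budget $R\beta$ with $R>0$. A bidding algorithm of a bidder is a pair $(\pi,B)$: $B$ (the bid set) is a multiset of $n$ nonnegative reals whose sum is at most the bidder's budget, and $\pi$ is a randomized algorithm permuting sequences of length $n$. Applying $\pi$ to a listing of $B$ gives the final bid sequence, whose $i$-th entry is the bid on object $i$. The two bidders' permutations are independent. Each object goes to the higher bid; on a tie each bidder wins it with probability $1/2$. $w(\pi_{\mathcal A},\pi_{\mathcal D},B_{\mathcal A},B_{\mathcal D})$ is the expected number of objects won by $\mathcal A$. $W(\pi_{\mathcal D},B_{\mathcal D})$ is its supremum over all bidding algorithms $(\pi_{\mathcal A},B_{\mathcal A})$ of $\mathcal A$. $\pi_{\rm unif}$ applies a uniformly random permutation. *)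

(* Defs.v *)
From HB Require Import structures.
From mathcomp Require Import all_boot all_order all_algebra all_fingroup.
From mathcomp Require Import classical_sets reals.
Set Implicit Arguments. Unset Strict Implicit. Unset Printing Implicit Defensive.
Import Order.TTheory GRing.Theory Num.Theory.
Local Open Scope ring_scope.
Local Open Scope classical_set_scope.

Section Auction.
Variables (R : realType) (n : nat).

(* A bid set (multiset of n nonnegative reals, sum at most budget), given by a listing. *)
Definition bid_set (budget : R) (b : 'I_n -> R) : Prop :=
  (forall i, 0 <= b i) /\ \sum_(i < n) b i <= budget.

(* A randomized permutation algorithm: a probability distribution on permutations. *)
Definition perm_dist (p : {perm 'I_n} -> R) : Prop :=
  (forall s, 0 <= p s) /\ \sum_(s : {perm 'I_n}) p s = 1.

Definition pi_unif : {perm 'I_n} -> R := fun _ => (n`!%:R)^-1.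

(* expected number of the object won by A with bids x (of A) and y (of D) *)
Definition win (x y : R) : R := if y < x then 1 else if x == y then 2^-1 else 0.

(* final bid on object i is b (s i) *)
Definition w (pA pD : {perm 'I_n} -> R) (bA bD : 'I_n -> R) : R :=
  \sum_(sA : {perm 'I_n}) \sum_(sD : {perm 'I_n})
     pA sA * pD sD * \sum_(i < n) win (bA (sA i)) (bD (sD i)).

Definition W (budgetA : R) (pD : {perm 'I_n} -> R) (bD : 'I_n -> R) : R :=
  sup [set x | exists pA bA, perm_dist pA /\ bid_set budgetA bA /\ x = w pA pD bA bD].

End Auction.

(* Main.v *)
Require Import Defs.
From HB Require Import structures.
From mathcomp Require Import all_boot all_order all_algebra all_fingroup.
From mathcomp Require Import classical_sets reals.
From mathcomp Require Import ring lra zify.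
Import Order.TTheory GRing.Theory Num.Theory.
Local Open Scope ring_scope.

Lemma win_ge0 (R : realType) (x y : R) : 0 <= win x y.
Proof. rewrite /win; case: ifP => // _; case: ifP => // _; lra. Qed.

Lemma win_le1 (R : realType) (x y : R) : win x y <= 1.
Proof. rewrite /win; case: ifP => // _; case: ifP => // _; lra. Qed.

Lemma win_lt (R : realType) (x y : R) : y < x -> win x y = 1.
Proof. by rewrite /win => ->. Qed.

Lemma sum_perm_i (R : realType) n (F : 'I_n -> R) (i : 'I_n) :
  n%:R * \sum_(s : {perm 'I_n}) F (s i) = n`!%:R * \sum_j F j.
Proof.
have indep : forall i', \sum_(s : {perm 'I_n}) F (s i') = \sum_(s : {perm 'I_n}) F (s i).
  move=> i'; rewrite (reindex_inj (mulgI (tperm i i'))) /=.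
  by apply: eq_bigr => s _; rewrite permM tpermR.
transitivity (\sum_(i' : 'I_n) \sum_(s : {perm 'I_n}) F (s i')).
  by rewrite (eq_bigr _ (fun i' _ => indep i')) sumr_const card_ord mulr_natl.
rewrite exchange_big /=.
transitivity (\sum_(s : {perm 'I_n}) \sum_j F j).
  by apply: eq_bigr => s _; rewrite [RHS](reindex_inj (@perm_inj _ s)).
by rewrite sumr_const card_Sn mulr_natl.
Qed.

Definition pdelta (R : realType) n : {perm 'I_n} -> R := fun s => (s == 1%g)%:R.

Lemma pdelta_dist (R : realType) n : perm_dist (@pdelta R n).
Proof.
split; first by move=> s; rewrite /pdelta ler0n.
rewrite /pdelta (bigD1 1%g) //= eqxx.
rewrite big1 ?addr0 // => s /negbTE -> //.
Qed.

Lemma w_delta (R : realType) n (bA bD : 'I_n -> R) : (0 < n)%N ->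
  w (@pdelta R n) (@pi_unif R n) bA bD =
  n%:R^-1 * \sum_i \sum_j win (bA i) (bD j).
Proof.
move=> hn.
rewrite /w (bigD1 1%g) //= [X in _ + X]big1 ?addr0; last first.
  by move=> s hs; apply: big1 => t _; rewrite /pdelta (negbTE hs) !mul0r.
have hf : (n`!%:R : R) != 0 by rewrite pnatr_eq0 -lt0n fact_gt0.
have hn' : (n%:R : R) != 0 by rewrite pnatr_eq0 -lt0n.
transitivity (n`!%:R^-1 * \sum_i \sum_(t : {perm 'I_n}) win (bA i) (bD (t i))).
  rewrite exchange_big mulr_sumr; apply: eq_bigr => t _.
  by rewrite /pdelta eqxx mul1r /pi_unif; congr (_ * _); apply: eq_bigr => i _; rewrite perm1.
rewrite !mulr_sumr; apply: eq_bigr => i _.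
have h := @sum_perm_i R n (fun j => win (bA i) (bD j)) i; simpl in h.
have -> : \sum_(t : {perm 'I_n}) win (bA i) (bD (t i)) = n`!%:R * (\sum_j win (bA i) (bD j)) / n%:R.
  by apply: (mulfI hn'); rewrite h [RHS]mulrC divfK.
by rewrite mulrA mulrA mulVf // mul1r mulrC.
Qed.

Lemma w_le (R : realType) n (pA : {perm 'I_n} -> R) (bA bD : 'I_n -> R) :
  perm_dist pA -> w pA (@pi_unif R n) bA bD <= n%:R.
Proof.
case=> hp0 hp1.
have hu0 : forall s, 0 <= @pi_unif R n s by move=> s; rewrite /pi_unif invr_ge0 ler0n.
have hu1 : \sum_(s : {perm 'I_n}) @pi_unif R n s = 1.
  rewrite /pi_unif sumr_const card_Sn -(mulr_natr (n`!%:R^-1)) mulVf // pnatr_eq0 -lt0n fact_gt0 //.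
rewrite /w.
apply: (@le_trans _ _ (\sum_(sA : {perm 'I_n}) \sum_(sD : {perm 'I_n}) pA sA * @pi_unif R n sD * n%:R)).
  apply: ler_sum => sA _; apply: ler_sum => sD _; apply: ler_wpM2l.
    by rewrite mulr_ge0.
  apply: (@le_trans _ _ (\sum_(i < n) (1 : R))); first by apply: ler_sum => i _; exact: win_le1.
  by rewrite sumr_const card_ord.
have -> : \sum_(sA : {perm 'I_n}) \sum_(sD : {perm 'I_n}) pA sA * @pi_unif R n sD * n%:R = n%:R; last by [].
transitivity (\sum_(sA : {perm 'I_n}) pA sA * n%:R); last by rewrite -mulr_suml hp1 mul1r.
apply: eq_bigr => sA _.
under eq_bigr do rewrite mulrAC.
by rewrite -mulr_sumr hu1 mulr1.
Qed.

Lemma comb (R : realType) n (bD : 'I_n -> R) (beta rho : R) (l : nat) :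
  (forall i, 0 <= bD i) -> \sum_i bD i = beta -> 0 < rho ->
  2 * beta < rho * (2 * n%:R + 1 - l%:R) -> (l <= n)%N ->
  exists x y, [/\ 0 <= x, 0 <= y, x + y <= rho &
    l%:R <= \sum_j win x (bD j) + \sum_j win y (bD j)].
Proof.
move=> h0 hs hrho hlt hln.
set s := sort <=%R [seq bD i | i <- enum 'I_n].
pose S k := nth 0 s k.
have hsz : size s = n by rewrite size_sort size_map size_enum_ord.
have hperm : perm_eq s [seq bD i | i <- enum 'I_n] by rewrite /s perm_sort perm_refl.
have hsum : forall F : R -> R, \sum_(k < n) F (S k) = \sum_i F (bD i).
  move=> F; transitivity (\sum_(v <- s) F v).
    by rewrite (big_nth 0) hsz big_mkord.
  by rewrite (perm_big _ hperm) big_map big_enum.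
have hsorted : sorted <=%R s := sort_sorted le_total _.
have hmono : forall k k', (k <= k')%N -> (k' < n)%N -> S k <= S k'.
  move=> k k' hk hk'; apply: (sorted_leq_nth le_trans lexx) => //; rewrite inE hsz //.
  exact: leq_ltn_trans hk hk'.
have hnn : forall k, (k < n)%N -> 0 <= S k.
  move=> k hk; have : S k \in s by rewrite mem_nth // hsz.
  by rewrite (perm_mem hperm) => /mapP [i _ ->].
have hcount : forall m x, (m < n)%N -> S m < x -> m.+1%:R <= \sum_j win x (bD j).
  move=> m x hm hx; rewrite -(hsum (win x)) -(big_mkord xpredT (fun k => win x (S k))).
  rewrite (@big_cat_nat _ _ _ m.+1) //=.
  apply: (@le_trans _ _ (\sum_(0 <= k < m.+1) win x (S k))); last first.
    by rewrite lerDl sumr_ge0 // => k _; exact: win_ge0.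
  rewrite -{1}(subn0 m.+1) -sumr_const_nat; apply: ler_sum_nat => k /andP[_ hk].
  by rewrite win_lt // (le_lt_trans (hmono k m hk hm) hx).
have hwsum : forall x, 0 <= \sum_j win x (bD j).
  by move=> x; rewrite sumr_ge0 // => j _; exact: win_ge0.
case: l hln hlt => [|l'] hln hlt.
  exists 0, 0; split => //; first by lra.
  by rewrite mulr0n addr_ge0.
have [hA|hA] := ltP (S l') rho.
  exists rho, 0; split; [lra|lra|lra|].
  by apply: (le_trans (hcount l' rho hln hA)); rewrite lerDl.
have [k hk|hB] := pickP (fun k : 'I_l' => S k + S (l' - k.+1)%N < rho).
  set d := (rho - S k - S (l' - k.+1)%N) / 2.
  have hd : 0 < d by rewrite /d; lra.
  have hk1 : (k < n)%N by move: (ltn_ord k) hln; lia.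
  have hk2 : (l' - k.+1 < n)%N by move: (ltn_ord k) hln; lia.
  have h1 := hcount k (S k + d) hk1 ltac:(lra).
  have h2 := hcount (l' - k.+1)%N (S (l' - k.+1)%N + d) hk2 ltac:(lra).
  exists (S k + d), (S (l' - k.+1)%N + d); split.
  - by have := hnn k hk1; lra.
  - by have := hnn _ hk2; lra.
  - by rewrite /d; lra.
  - have -> : (l'.+1 = k.+1 + (l' - k.+1).+1)%N by move: (ltn_ord k); lia.
    by rewrite natrD lerD.
exfalso.
have e1 : beta = \sum_(0 <= k < l') S k + \sum_(l' <= k < n) S k.
  rewrite -hs -(hsum (fun v => v)) -(big_mkord xpredT (fun k => S k)).
  by rewrite (@big_cat_nat _ _ _ l') //= ltnW.
have e2 : rho * (n - l')%:R <= \sum_(l' <= k < n) S k.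
  rewrite mulr_natr -sumr_const_nat; apply: ler_sum_nat => k /andP[hk1 hk2].
  exact: le_trans hA (hmono l' k hk1 hk2).
have e3 : rho * l'%:R <= 2 * \sum_(0 <= k < l') S k.
  have er : \sum_(0 <= k < l') S k = \sum_(0 <= k < l') S (l' - k.+1)%N.
    by rewrite big_nat_rev.
  rewrite mulr_natl mulr2n {2}er -big_split /= mulr_natr -{1}(subn0 l') -sumr_const_nat.
  apply: ler_sum_nat => k /andP[_ hk].
  have := hB (Ordinal hk); rewrite /= => /negbT; rewrite -leNgt //.
move: e2; rewrite natrB; last by apply: ltnW.
move: hlt; rewrite -addn1 natrD => hlt e2.
nra.
Qed.

Theorem lemma5 (R : realType) (n : nat) (beta r : R) (bD : 'I_n -> R) :
  (1 <= n)%N -> 0 < beta ->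
  (n%:R)^-1 < r -> r <= 2 / (n.+1)%:R ->
  (forall i, 0 <= bD i) -> \sum_(i < n) bD i = beta ->
  ((Num.ceil (2 * n%:R - 2 / r + 1) - 1)%:~R / n%:R
     <= W (r * beta) (@pi_unif R n) bD).
Proof.
move=> hn1 hb hr1 hr2 h0 hs.
have hn0 : (0 : R) < n%:R by rewrite ltr0n.
have hr0 : 0 < r by apply: lt_trans hr1; rewrite invr_gt0.
have hnn : n%:R^-1 * n%:R = 1 :> R by rewrite mulVf // gt_eqF.
have hn1' : (0 : R) < n.+1%:R by rewrite ltr0n.
have hnn1 : 2 / n.+1%:R * n.+1%:R = 2 :> R by rewrite divfK // gt_eqF.
have hrn : 1 < r * n%:R.
  have : 0 < (r - n%:R^-1) * n%:R by rewrite mulr_gt0 // subr_gt0.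
  by rewrite mulrBl hnn; lra.
have hrn1 : r * n.+1%:R <= 2.
  have : 0 <= (2 / n.+1%:R - r) * n.+1%:R by rewrite mulr_ge0 // ?subr_ge0 // ltW.
  by rewrite mulrBl hnn1; lra.
have h2r : r * (2 / r) = 2 by rewrite mulrC divfK // gt_eqF.
have hn2 : (1 < n)%N.
  case: n hn1 hrn hrn1 {hn0 hnn hn1' hnn1 hr1 hr2 h0 hs bD} => [|[|n']] //= _.
  by move=> h1 h2; exfalso; move: h1 h2; rewrite mulr1; lra.
set x0 := 2 * n%:R - 2 / r + 1.
have hx0 : 0 < x0 by rewrite /x0; nra.
have hL := ceilB1_lt x0.
have hc : (0 < Num.ceil x0)%R by rewrite ceil_gt0.
have [l hl] : exists l : nat, Num.ceil x0 - 1 = l%:Z.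
  by exists `|(Num.ceil x0 - 1)|%N; rewrite gez0_abs //; lia.
rewrite hl in hL *.
change ((l%:Z)%:~R : R) with (l%:R : R) in hL |- *.
have hln : (l <= n)%N.
  have : (l%:R : R) < n%:R by rewrite /x0 in hL; nra.
  by rewrite ltr_nat => /ltnW.
have hlt : 2 * beta < r * beta * (2 * n%:R + 1 - l%:R).
  have hp : 0 < r * beta * (x0 - l%:R) by rewrite !mulr_gt0 // subr_gt0.
  have e : r * beta * (x0 - l%:R) = r * beta * (2 * n%:R + 1 - l%:R) - 2 * beta.
    by rewrite /x0; field; rewrite gt_eqF.
  lra.
have [x [y [hx hy hxy hv]]] := @comb R n bD beta (r * beta) l h0 hs ltac:(by rewrite mulr_gt0) hlt hln.
pose F k := if (k == 0)%N then x else if (k == 1)%N then y else 0.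
pose bA (i : 'I_n) := F (val i).
have hexp : forall G : R -> R, \sum_(i < n) G (bA i) = G x + G y + \sum_(2 <= k < n) G (F k).
  move=> G; rewrite -(big_mkord xpredT (fun k => G (F k))).
  by rewrite big_ltn ?(ltn_trans _ hn2) // big_ltn // addrA.
have hsumA : \sum_i bA i = x + y.
  rewrite (hexp (fun v => v)) big_nat_cond big1 ?addr0 //.
  by move=> i /andP[/andP[hi _] _]; case: i hi => [|[|i]].
have hval : l%:R <= \sum_i \sum_j win (bA i) (bD j).
  rewrite (hexp (fun v => \sum_j win v (bD j))); apply: (le_trans hv).
  by rewrite lerDl sumr_ge0 // => k _; rewrite sumr_ge0 // => j _; exact: win_ge0.
apply: (@le_trans _ _ (w (@pdelta R n) (@pi_unif R n) bA bD)).
  rewrite w_delta // mulrC; apply: ler_wpM2l => //; by rewrite invr_ge0 ltW.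
apply: ub_le_sup.
  exists n%:R => z [pA [bA' [hpA [_ ->]]]]; exact: w_le.
exists (@pdelta R n), bA; split; first exact: pdelta_dist.
split => //; split; last by rewrite hsumA.
by move=> i; rewrite /bA /F; case: ifP => // _; case: ifP.
Qed.
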